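(* Let $A\in\mathbb{R}^{m\times N}$, let $x\in\mathbb{R}^N$ be a nonzero $k$-sparse vector and $q\in(1,\infty]$. If $\rho_{q,3^{q/(q-1)}k}(A)>0$, then the unique solution of $\min_{z\in\mathbb{R}^N\setminus\{0\}}\lVert z\rVert_1/\lVert z\rVert_q$ subject to $Az=Ax$ is $x$.
   Context: For nonzero $z\in\mathbb{R}^N$ and $q\in(1,\infty)$, $s_q(z)=\left(\lVert z\rVert_1/\lVert z\rVert_q\right)^{q/(q-1)}$, and $s_\infty(z)=\lVert z\rVert_1/\lVert z\rVert_\infty$. For real $s\ge1$, $\rho_{q,s}(A)=\min\{\lVert Az\rVert_2/\lVert z\rVert_q: z\ne0,\ s_q(z)\le s\}$. For $q=\infty$ interpret $q/(q-1)=1$. A vector is $k$-sparse if it has at most $k$ nonzero entries. *)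

(* Defs.v *)
From HB Require Import structures.
From mathcomp Require Import all_boot all_order all_algebra.
From mathcomp Require Import all_classical all_reals all_analysis.
Set Implicit Arguments. Unset Strict Implicit. Unset Printing Implicit Defensive.
Import Order.TTheory GRing.Theory Num.Theory.
Local Open Scope classical_set_scope.
Local Open Scope ring_scope.

Section Defs.
Variable R : realType.

Definition l1_norm (N : nat) (z : 'cV[R]_N) : R := \sum_(i < N) `|z i 0|.

Definition l2_norm (m : nat) (z : 'cV[R]_m) : R := Num.sqrt (\sum_(i < m) (z i 0) ^+ 2).

(* lq norm, q in the extended reals; q = +oo gives the max norm.
   (Only used for q in (1, +oo].) *)
Definition lq_norm (q : \bar R) (N : nat) (z : 'cV[R]_N) : R :=
  match q with
  | EFin r => (\sum_(i < N) `|z i 0| `^ r) `^ (r^-1)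
  | +oo%E => \big[Num.max/0]_(i < N) `|z i 0|
  | -oo%E => 0
  end.

Definition q_conj_exp (q : \bar R) : R :=
  match q with
  | EFin r => r / (r - 1)
  | _ => 1
  end.

Definition s_q (q : \bar R) (N : nat) (z : 'cV[R]_N) : R :=
  (l1_norm z / lq_norm q z) `^ (q_conj_exp q).

(* rho_{q,s}(A) = min { ||Az||_2/||z||_q : z <> 0, s_q(z) <= s },
   written as the infimum of that set (the minimum is attained). *)
Definition rho_qs (q : \bar R) (s : R) (m N : nat) (A : 'M[R]_(m, N)) : R :=
  inf [set r : R | exists z : 'cV[R]_N,
         [/\ z != 0, s_q q z <= s & r = l2_norm (A *m z) / lq_norm q z]].

Definition ksparse (k N : nat) (x : 'cV[R]_N) : Prop :=
  (#|[set i : 'I_N | x i ord0 != 0%R]| <= k)%N.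

Definition l1lq_ratio (q : \bar R) (N : nat) (z : 'cV[R]_N) : R := l1_norm z / lq_norm q z.

End Defs.

(* Main.v *)
Require Import Defs.
From HB Require Import structures.
From mathcomp Require Import all_boot all_order all_algebra.
From mathcomp Require Import all_classical all_reals all_analysis.
From mathcomp Require Import ring lra.
Import Order.TTheory GRing.Theory Num.Theory.
Local Open Scope classical_set_scope.
Local Open Scope ring_scope.


Section H0.
Variable R : realType.

Lemma conv2 (p l u v : R) : 1 <= p -> 0 <= l -> l <= 1 -> 0 <= u -> 0 <= v ->
  (l * u + (1 - l) * v) `^ p <= l * u `^ p + (1 - l) * v `^ p.
Proof.
move=> p1 l0 l1 u0 v0.
have := @convex_powR R p p1 (Itv01 l0 l1) u v.
rewrite !inE /= !in_itv /= !andbT => /(_ u0 v0).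
by rewrite !convRE.
Qed.

Lemma powR_inv_pow (a p : R) : 0 <= a -> 0 < p -> (a `^ p^-1) `^ p = a.
Proof. by move=> a0 p0; rewrite -powRrM mulVf ?gt_eqF // powRr1. Qed.

Lemma powR_pow_inv (a p : R) : 0 <= a -> 0 < p -> (a `^ p) `^ p^-1 = a.
Proof. by move=> a0 p0; rewrite -powRrM mulfV ?gt_eqF // powRr1. Qed.

Lemma hoelder_seq (I : Type) (s : seq I) (a b : I -> R) (p q : R) :
  (forall i, 0 <= a i) -> (forall i, 0 <= b i) -> 0 < p -> 0 < q -> p^-1 + q^-1 = 1 ->
  \sum_(i <- s) a i * b i <=
    (\sum_(i <- s) a i `^ p) `^ p^-1 * (\sum_(i <- s) b i `^ q) `^ q^-1.
Proof.
move=> a0 b0 p0 q0 pq; elim: s => [|x s IH].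
  by rewrite !big_nil mulr_ge0 ?powR_ge0.
rewrite !big_cons.
have sa : 0 <= \sum_(i <- s) a i `^ p by apply: sumr_ge0 => i _; apply: powR_ge0.
have sb : 0 <= \sum_(i <- s) b i `^ q by apply: sumr_ge0 => i _; apply: powR_ge0.
apply: le_trans (lerD (lexx _) IH) _.
have := hoelder2 (a0 x) (powR_ge0 (\sum_(i <- s) a i `^ p) p^-1) (b0 x)
   (powR_ge0 (\sum_(i <- s) b i `^ q) q^-1) p0 q0 pq.
by rewrite !powR_inv_pow.
Qed.

End H0.



Section H1.
Variable R : realType.
Variable N : nat.

Lemma powRV (a r : R) : 0 < a -> (a^-1) `^ r = (a `^ r)^-1.
Proof.
move=> a0; apply: (@mulfI _ (a `^ r)); first by rewrite gt_eqF // powR_gt0.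
rewrite -powRM ?invr_ge0 ?ltW // mulfV ?gt_eqF // powR1 mulfV //.
by rewrite gt_eqF // powR_gt0.
Qed.

Lemma lq_tri (r : R) (x h : 'cV[R]_N) : 1 <= r ->
  0 < lq_norm r%:E x -> 0 < lq_norm r%:E h ->
  lq_norm r%:E (x + h) <= lq_norm r%:E x + lq_norm r%:E h.
Proof.
rewrite /lq_norm => r1.
have r0 : 0 < r by apply: lt_le_trans r1.
move eSx : (\sum_(i < N) `|x i 0| `^ r) => Sx.
move eSh : (\sum_(i < N) `|h i 0| `^ r) => Sh.
move ea : (Sx `^ r^-1) => a; move eb : (Sh `^ r^-1) => b => a0 b0.
have Sx0 : 0 <= Sx by rewrite -eSx; apply: sumr_ge0 => i _; apply: powR_ge0.
have Sh0 : 0 <= Sh by rewrite -eSh; apply: sumr_ge0 => i _; apply: powR_ge0.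
have aS : a `^ r = Sx by rewrite -ea powR_inv_pow.
have bS : b `^ r = Sh by rewrite -eb powR_inv_pow.
have Sxp : 0 < Sx by rewrite -aS; apply: powR_gt0.
have Shp : 0 < Sh by rewrite -bS; apply: powR_gt0.
have ab0 : 0 < a + b by rewrite addr_gt0.
move el : (a / (a + b)) => l.
have l1 : 1 - l = b / (a + b) by rewrite -el -{1}(divff (lt0r_neq0 ab0)) -mulrBl [a + b]addrC addrK.
have l0 : 0 <= l by rewrite -el divr_ge0 // ltW.
have l1p : 0 <= 1 - l by rewrite l1 divr_ge0 // ltW.
have lle1 : l <= 1 by rewrite -subr_ge0.
have key : forall i : 'I_N, `|(x + h) i 0| `^ r <=
    (a + b) `^ r * (l * (`|x i 0| `^ r / Sx) + (1 - l) * (`|h i 0| `^ r / Sh)).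
  move=> i; rewrite mxE.
  apply: (@le_trans _ _ ((`|x i 0| + `|h i 0|) `^ r)).
    by apply: ge0_ler_powR; rewrite ?nnegrE ?addr_ge0 ?(ltW r0) //; exact: ler_normD.
  have -> : `|x i 0| + `|h i 0| =
      (a + b) * (l * (`|x i 0| / a) + (1 - l) * (`|h i 0| / b)).
    rewrite l1 -el; field; by rewrite ?gt_eqF.
  have e0 : 0 <= l * (`|x i 0| / a) + (1 - l) * (`|h i 0| / b).
    by rewrite addr_ge0 // mulr_ge0 // divr_ge0 // ltW.
  rewrite (powRM _ (ltW ab0) e0).
  apply: ler_wpM2l; first exact: powR_ge0.
  have -> : `|x i 0| `^ r / Sx = (`|x i 0| / a) `^ r.
    by rewrite powRM // ?invr_ge0 ?(ltW a0) // powRV // aS.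
  have -> : `|h i 0| `^ r / Sh = (`|h i 0| / b) `^ r.
    by rewrite powRM // ?invr_ge0 ?(ltW b0) // powRV // bS.
  by apply: conv2 => //; rewrite divr_ge0 // ltW.
apply: (@le_trans _ _ (((a + b) `^ r) `^ r^-1)); last by rewrite powR_pow_inv // ltW.
apply: ge0_ler_powR; rewrite ?nnegrE ?invr_ge0 ?(ltW r0) ?powR_ge0 //.
  by apply: sumr_ge0 => i _; apply: powR_ge0.
apply: le_trans (ler_sum _ (fun i _ => key i)) _.
rewrite -mulr_sumr big_split /= -!mulr_sumr -!mulr_suml eSx eSh !divff ?lt0r_neq0 //.
by rewrite !mulr1 [l + _]addrC subrK mulr1.
Qed.

End H1.



Section H2.
Variable R : realType.
Variable N : nat.

Lemma cv_neq0 (z : 'cV[R]_N) : z != 0 -> exists i : 'I_N, z i 0 != 0.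
Proof.
move=> z0; apply/existsP; apply: contraNT z0 => /existsPn H.
apply/eqP/matrixP => i j; rewrite ord1 mxE.
by move: (H i); rewrite negbK => /eqP.
Qed.

Lemma lq_ge0 q (z : 'cV[R]_N) : 0 <= lq_norm q z.
Proof.
case: q => [r||] /=; first exact: powR_ge0; last exact: lexx.
by elim/big_ind: _ => // u v u0 v0; rewrite le_max u0.
Qed.

Lemma lq_gt0 q (z : 'cV[R]_N) : (1%:E < q)%E -> z != 0 -> 0 < lq_norm q z.
Proof.
move=> q1 /cv_neq0 [i zi].
case: q q1 => [r||] //= q1.
  have r0 : r != 0 by rewrite lte_fin in q1; rewrite gt_eqF // (lt_trans _ q1).
  apply: powR_gt0; rewrite (bigD1 i) //=.
  have Fi : 0 < `|z i 0| `^ r by apply: powR_gt0; rewrite normr_gt0.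
  apply: (lt_le_trans Fi); rewrite lerDl; apply: sumr_ge0 => j _; exact: powR_ge0.
apply: (@lt_le_trans _ _ `|z i 0|); first by rewrite normr_gt0.
exact: le_bigmax.
Qed.

Lemma lq_tri' q (x h : 'cV[R]_N) : (1%:E < q)%E -> x != 0 -> h != 0 ->
  lq_norm q (x + h) <= lq_norm q x + lq_norm q h.
Proof.
move=> q1 x0 h0.
case: q q1 => [r||] //= q1.
  apply: lq_tri; first by rewrite lte_fin in q1; exact: ltW.
    exact: (@lq_gt0 r%:E).
  exact: (@lq_gt0 r%:E).
apply: bigmax_le; first by rewrite addr_ge0 // (@lq_ge0 +oo%E).
move=> i _; rewrite mxE; apply: (le_trans (ler_normD _ _)).
by apply: lerD; exact: le_bigmax.
Qed.

Lemma supp_bound q (z : 'cV[R]_N) (S : {set 'I_N}) k : (1%:E < q)%E -> (#|S| <= k)%N ->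
  \sum_(i in S) `|z i 0| <= k%:R `^ (q_conj_exp q)^-1 * lq_norm q z.
Proof.
move=> q1 Sk.
case: q q1 => [r||] //= q1; last first.
  rewrite invr1 powRr1 //.
  apply: (@le_trans _ _ (\sum_(i in S) \big[Num.max/0]_(j < N) `|z j 0|)).
    by apply: ler_sum => i _; exact: le_bigmax.
  rewrite sumr_const -[_ *+ #|S|]mulr_natl; apply: ler_wpM2r; first exact: (@lq_ge0 +oo%E z).
  by rewrite ler_nat.
rewrite lte_fin in q1.
have r0 : 0 < r by apply: lt_trans q1.
have r10 : 0 < r - 1 by rewrite subr_gt0.
have q0 : 0 < r / (r - 1) by rewrite divr_gt0.
have := @hoelder_seq R _ (index_enum 'I_N) (fun i => `|z i 0|) (fun i => (i \in S)%:R)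
   r (r / (r - 1)) (fun i => normr_ge0 _) (fun i => ler0n _ _) r0 q0.
have pq : r^-1 + (r / (r - 1))^-1 = 1.
  rewrite invf_div; field; by rewrite ?gt_eqF.
move=> /(_ pq).
have -> : \sum_(i <- index_enum 'I_N) `|z i 0| * (i \in S)%:R = \sum_(i in S) `|z i 0|.
  rewrite [RHS]big_mkcond; apply: eq_bigr => i _.
  by case: (i \in S); rewrite ?mulr1 ?mulr0.
have -> : \sum_(i <- index_enum 'I_N) (i \in S)%:R `^ (r / (r - 1)) = #|S|%:R :> R.
  rewrite -sumr_const [RHS]big_mkcond; apply: eq_bigr => i _.
  by case: (i \in S); rewrite ?powR1 ?powR0 // gt_eqF.
move=> /le_trans; apply; rewrite mulrC; apply: ler_wpM2r; first exact: powR_ge0.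
by apply: ge0_ler_powR; rewrite ?nnegrE ?ler_nat // invr_ge0 ltW.
Qed.

End H2.



Section H3.
Variable R : realType.
Variable N : nat.

Lemma arith {lx lh lw sh tnx tnh tnw knh : R} : lx + lh - 2*sh <= lw -> sh <= knh ->
  lw <= tnw -> tnw <= tnx + tnh -> tnh <= knh -> tnx = lx -> 3 * knh < lh -> False.
Proof. move=> *; lra. Qed.

Lemma core (n : 'cV[R]_N -> R) (k : R) (x : 'cV[R]_N) m (A : 'M[R]_(m, N))
  (S : {set 'I_N}) :
 (forall z, z != 0 -> 0 < n z) ->
 (forall x h, x != 0 -> h != 0 -> n (x + h) <= n x + n h) ->
 (forall z : 'cV[R]_N, \sum_(i in S) `|z i 0| <= k * n z) ->
 (forall i, i \notin S -> x i 0 = 0) ->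
 (forall h, h != 0 -> A *m h = 0 -> 3 * k * n h < l1_norm h) ->
 x != 0 -> forall w, w != 0 -> A *m w = A *m x -> w != x ->
 l1_norm x / n x < l1_norm w / n w.
Proof.
move=> npos ntri nsupp xS N4 x0 w w0 Aw wx.
have h0 : w - x != 0 by rewrite subr_eq0.
have Ah : A *m (w - x) = 0 by rewrite mulmxBr Aw subrr.
move: (w - x) h0 Ah (subrK x w) => h h0 Ah ew.
rewrite -ew addrC in w0 *.
have nx := npos _ x0; have nh := npos _ h0; have nw := npos _ w0.
rewrite ltNge; apply/negP => H.
have l1x0 : 0 <= l1_norm x by apply: sumr_ge0 => i _.
set t := l1_norm x / n x in H.
have t0 : 0 <= t by rewrite divr_ge0 // ltW.
have l1xS : l1_norm x = \sum_(i in S) `|x i 0|.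
  rewrite /l1_norm [RHS]big_mkcond; apply: eq_bigr => i _.
  by case: ifPn => // /xS ->; rewrite normr0.
have tk : t <= k by rewrite /t ler_pdivrMr // l1xS; exact: nsupp.
have txe : t * n x = l1_norm x by rewrite /t divfK // gt_eqF.
have A3 : l1_norm (x + h) <= t * n (x + h) by rewrite -ler_pdivrMr.
have A4 : t * n (x + h) <= t * n x + t * n h by rewrite -mulrDr ler_wpM2l // ntri.
have A6 : t * n h <= k * n h by rewrite ler_wpM2r // ltW.
have A2 := nsupp h.
have A1 : l1_norm x + l1_norm h - 2 * \sum_(i in S) `|h i 0| <= l1_norm (x + h).
  rewrite /l1_norm mulr_sumr [X in _ - X]big_mkcond -big_split /= -sumrB.
  apply: ler_sum => i _; rewrite mxE.
  case: ifPn => iS. 2: by rewrite xS // normr0 !add0r subr0.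
  have -> : forall a b : R, a + b - 2 * b = a - b by move=> a b; ring.
  exact: lerB_normD.
have H2 : 3 * (k * n h) < l1_norm h by rewrite mulrA; exact: N4.
exact: (arith A1 A2 A3 A4 A6 txe H2).
Qed.

End H3.



Theorem corollary1 (R : realType) (m N k : nat) (A : 'M[R]_(m, N))
  (x : 'cV[R]_N) (q : \bar R) :
  (1%:E < q)%E -> x != 0 -> ksparse k x ->
  0 < rho_qs q (3 `^ q_conj_exp q * k%:R) A ->
  [set z : 'cV[R]_N | [/\ z != 0, A *m z = A *m x &
      forall w : 'cV[R]_N, w != 0 -> A *m w = A *m x -> l1lq_ratio q z <= l1lq_ratio q w]]
  = [set x].
Proof.
move=> q1 x0 xk rho0.
have p0 : 0 < q_conj_exp q.
  move: q1; clear -q; case: q => [r||] //= q1; rewrite lte_fin in q1.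
  by rewrite divr_gt0 ?subr_gt0 // (lt_trans _ q1).
move: p0 rho0; move ep : (q_conj_exp q) => p p0 rho0.
move ek : (k%:R `^ p^-1) => kk.
move: xk; rewrite /ksparse; set S0 := (X in #|X|) => xk0.
pose S := [set i : 'I_N | x i ord0 != 0]%SET.
have xk : (#|S| <= k)%N.
  suff -> : #|S| = #|S0| by [].
  apply: eq_card => i; rewrite /S /S0 inE.
  by apply/idP/idP => H; [apply/mem_set | move/set_mem: H].

have xS : forall i, i \notin S -> x i 0 = 0.
  by move=> i; rewrite /S inE negbK => /eqP.
have N4 : forall h : 'cV[R]_N, h != 0 -> A *m h = 0 -> 3 * kk * lq_norm q h < l1_norm h.
  move=> h h0 Ah; rewrite ltNge; apply/negP => H.
  have nh := @lq_gt0 _ _ q h q1 h0.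
  have kk0 : 0 <= kk by rewrite -ek powR_ge0.
  have H' : l1_norm h / lq_norm q h <= 3 * kk by rewrite ler_pdivrMr.
  have sq : s_q q h <= 3 `^ p * k%:R.
    rewrite /s_q /l1lq_ratio.
    have kp : k%:R = kk `^ p by rewrite -ek powR_inv_pow.
    rewrite ep kp -powRM ?ler0n //.
    apply: ge0_ler_powR.
    - exact: ltW.
    - rewrite nnegrE divr_ge0 //; [exact: sumr_ge0 | exact: lq_ge0].
    - by rewrite nnegrE mulr_ge0.
    - exact: H'.
  move: rho0; rewrite /rho_qs; set E := [set r | _] => rho0.
  have hl : has_lbound E.
    exists 0 => r [z [_ _ ->]]; rewrite divr_ge0 ?sqrtr_ge0 //; exact: lq_ge0.
  have E0 : E 0.
    exists h; split => //; rewrite Ah /l2_norm big1 ?sqrtr0 ?mul0r // => i _.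
    by rewrite mxE expr2 mulr0.
  by have := ge_inf hl E0; rewrite leNgt rho0.
have nsupp : forall z : 'cV[R]_N, \sum_(i in S) `|z i 0| <= kk * lq_norm q z.
  by move=> z; have := @supp_bound R N q z S k q1 xk; rewrite ep ek.
have C := @core R N (@lq_norm R q N) kk x m A S (fun z => @lq_gt0 R N q z q1)
  (fun a b => @lq_tri' R N q a b q1) nsupp xS N4 x0.
apply/seteqP; split => z /=.
  case=> z0 Az Hz; apply/eqP; apply: contraT => zx.
  have := C z z0 Az zx; have := Hz x x0 erefl.
  by rewrite /l1lq_ratio => /le_lt_trans H /H; rewrite ltxx.
move=> ->; split => // w w0 Aw.
have [->|wx] := eqVneq w x; first exact: lexx.
exact: ltW (C w w0 Aw wx).
Qed.
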